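(* Let $G$ be any of the calculi $\mathbf{GE},\mathbf{GM},\mathbf{GMC},\mathbf{GEN},\mathbf{GMN},\mathbf{GK},\mathbf{GCE},\mathbf{GCM},\mathbf{GCMC},\mathbf{GCEN},\mathbf{GCMN},\mathbf{GCK},\mathbf{GCKID},\mathbf{GCKCEM},\mathbf{GCKCEMID}$. If $G$ has the modal uniform Lyndon interpolation property (MULIP), then $G$ has ULIP. Likewise, if $G$ has the modal uniform interpolation property (MUIP), then $G$ has UIP.
   Context: Formulas: atoms, $\bot$, $\wedge,\vee,\to$ and unary $\Box$ (for $\mathbf{GE},\dots,\mathbf{GK}$) or binary $\triangleright$ (for the calculi named $\mathbf{GC}\dots$). Weight: $w(\bot)=w(p)=0$, $w(A\odot B)=w(A)+w(B)+1$ for $\odot\in\{\wedge,\vee,\to,\triangleright\}$, $w(\Box A)=w(A)+1$; the weight of a sequent is the sum of the weights of its formulas; $S$ is lower than $T$ if its weight is smaller. Positive/negative variables: $V^+(p)=\{p\}$, $V^-(p)=\varnothing$; $V^\pm(\bot)=\varnothing$; $V^\pm(\phi\odot\psi)=V^\pm(\phi)\cup V^\pm(\psi)$ for $\odot\in\{\wedge,\vee\}$; $V^+(\phi\to\psi)=V^-(\phi)\cup V^+(\psi)$, $V^-(\phi\to\psi)=V^+(\phi)\cup V^-(\psi)$; $V^\pm(\Box\phi)=V^\pm(\phi)$; $V^+(\phi\triangleright\psi)=V^-(\phi)\cup V^+(\psi)$, $V^-(\phi\triangleright\psi)=V^+(\phi)\cup V^-(\psi)$; $V=V^+\cup V^-$;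 $p^\circ$-free means $p\notin V^\circ$, $\diamond$ is the sign opposite to $\circ\in\{+,-\}$. For $S=\Gamma\Rightarrow\Delta$: $V^+(S)=\bigcup_{\gamma\in\Gamma}V^-(\gamma)\cup\bigcup_{\delta\in\Delta}V^+(\delta)$, $V^-(S)$ dually; $(\Gamma\Rightarrow\Delta)\cdot(\Pi\Rightarrow\Lambda)=(\Gamma,\Pi\Rightarrow\Delta,\Lambda)$. Calculi: $\mathbf{G3W}$ has axioms $\Gamma,p\Rightarrow p,\Delta$ ($p$ atomic), $\Gamma,\bot\Rightarrow\Delta$, the rules $L\wedge$ (from $\Gamma,\phi,\psi\Rightarrow\Delta$ infer $\Gamma,\phi\wedge\psi\Rightarrow\Delta$), $R\wedge$ (from $\Gamma\Rightarrow\phi,\Delta$, $\Gamma\Rightarrow\psi,\Delta$ infer $\Gamma\Rightarrow\phi\wedge\psi,\Delta$), $L\vee$ (from $\Gamma,\phi\Rightarrow\Delta$, $\Gamma,\psi\Rightarrow\Delta$ infer $\Gamma,\phi\vee\psi\Rightarrow\Delta$), $R\vee$ (from $\Gamma\Rightarrow\phi,\psi,\Delta$ infer $\Gamma\Rightarrow\phi\vee\psi,\Delta$), $L\to$ (from $\Gamma\Rightarrow\phi,\Delta$, $\Gamma,\psi\Rightarrow\Delta$ infer $\Gamma,\phi\to\psi\Rightarrow\Delta$), $R\to$ (from $\Gamma,\phi\Rightarrow\psi,\Delta$ infer $\Gamma\Rightarrow\phi\to\psi,\Delta$), and left/right weakening. ''$\alpha\Leftrightarrow\beta$'' as a premise abbreviates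 $\alpha\Rightarrow\beta$ and $\beta\Rightarrow\alpha$. Modal rules: $(E)$ from $\phi\Leftrightarrow\psi$ infer $\Box\phi\Rightarrow\Box\psi$; $(M)$ from $\phi\Rightarrow\psi$ infer $\Box\phi\Rightarrow\Box\psi$; $(MC)$ ($n\ge1$) from $\phi_1,\dots,\phi_n\Rightarrow\psi$ infer $\Box\phi_1,\dots,\Box\phi_n\Rightarrow\Box\psi$; $(N)$ from $\Rightarrow\psi$ infer $\Rightarrow\Box\psi$. Conditional rules: $(CE)$ from $\phi_0\Leftrightarrow\phi_1$, $\psi_0\Leftrightarrow\psi_1$ infer $\phi_1\triangleright\psi_1\Rightarrow\phi_0\triangleright\psi_0$; $(CM)$ from $\phi_0\Leftrightarrow\phi_1$, $\psi_1\Rightarrow\psi_0$ infer the same; $(CMC)$ ($n\ge1$) from $\phi_0\Leftrightarrow\phi_i$ ($1\le i\le n$), $\psi_1,\dots,\psi_n\Rightarrow\psi_0$ infer $\phi_1\triangleright\psi_1,\dots,\phi_n\triangleright\psi_n\Rightarrow\phi_0\triangleright\psi_0$; $(CN)$ from $\Rightarrow\psi_0$ infer $\Rightarrow\phi_0\triangleright\psi_0$; $(CKID)$ (finite possibly empty $I$) from $\phi_0\Leftrightarrow\phi_i$ ($i\in I$), $\phi_0,\{\psi_i\}_{i\in I}\Rightarrow\psi_0$ infer $\{\phi_i\triangleright\psi_i\}_{i\in I}\Rightarrow\phi_0\triangleright\psi_0$; $(CKCEM)$ from $\phi_0\Leftrightarrow\phi_r$ ($r\in I\cup J$), $\{\psi_i\}_{i\in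 I}\Rightarrow\psi_0,\{\psi_j\}_{j\in J}$ infer $\{\phi_i\triangleright\psi_i\}_{i\in I}\Rightarrow\phi_0\triangleright\psi_0,\{\phi_j\triangleright\psi_j\}_{j\in J}$; $(CKCEMID)$ as $(CKCEM)$ with $\phi_0$ added to the antecedent of the last premise. $\mathbf{GE},\mathbf{GM},\mathbf{GMC}$ = $\mathbf{G3W}+(E),(M),(MC)$; $\mathbf{GEN},\mathbf{GMN},\mathbf{GK}$ = these $+(N)$; $\mathbf{GCE},\mathbf{GCM},\mathbf{GCMC},\mathbf{GCKID},\mathbf{GCKCEM},\mathbf{GCKCEMID}$ = $\mathbf{G3W}+(CE),(CM),(CMC),(CKID),(CKCEM),(CKCEMID)$; $\mathbf{GCEN},\mathbf{GCMN},\mathbf{GCK}$ = $\mathbf{GCE},\mathbf{GCM},\mathbf{GCMC}+(CN)$. The modal/conditional rules of $G$ (set $\mathcal{M}$) are its rules other than the axioms and the rules of $\mathbf{G3W}$. Interpolants: for a set $\mathcal{R}$ of rules of $G$, a uniform $\forall^\circ_p$-interpolant of $S$ w.r.t. $\mathcal{R}$ is a $p^\circ$-free formula $\theta$ with $V^\dagger(\theta)\subseteq V^\dagger(S)$ for both $\dagger$, $G\vdash S\cdot(\theta\Rightarrow)$, and such that for every $\Gamma\Rightarrow\Delta$ with $p\notin V^\diamond(\Gamma\Rightarrow\Delta)$, if $S\cdot(\Gamma\Rightarrow\Delta)$ has a $G$-derivation whose last inference is an instance of a rule in $\mathcal{R}$ then $G\vdash\Gamma\Rightarrow\theta,\Delta$.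 A uniform $\forall^\circ_p$-interpolant of $S$ (in $G$) is the same with the last condition replaced by: $G\vdash S\cdot(\Gamma\Rightarrow\Delta)$ implies $G\vdash\Gamma\Rightarrow\theta,\Delta$. $G$ has ULIP if every $S,p,\circ$ admits a uniform $\forall^\circ_p$-interpolant. $\mathcal{U}^\circ_p(S)$: every sequent lower than $S$ has a uniform $\forall^\circ_p$-interpolant in $G$. $G$ has MULIP if for every $S,p,\circ$ there is a formula $\theta$ such that, if $\mathcal{U}^\circ_p(S)$ holds, then $\theta$ is a uniform $\forall^\circ_p$-interpolant of $S$ w.r.t. $\mathcal{M}$. UIP and MUIP are defined identically with all polarities dropped ($\theta$ $p$-free, $V(\theta)\subseteq V(S)$, $\Gamma\Rightarrow\Delta$ $p$-free, $\mathcal{U}_p(S)$ accordingly). *)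

(* Defs.v *)
From Stdlib Require Import List Permutation.
Import ListNotations.

Inductive formula : Type :=
| Var (n : nat)
| Bot
| And (a b : formula)
| Or (a b : formula)
| Imp (a b : formula)
| Box (a : formula)
| Cond (a b : formula).

Fixpoint fweight (f : formula) : nat :=
  match f with
  | Var _ | Bot => 0
  | And a b | Or a b | Imp a b | Cond a b => fweight a + fweight b + 1
  | Box a => fweight a + 1
  end.

(* A sequent Gamma => Delta: antecedent and succedent multisets,
   represented by lists and always considered up to permutation. *)
Definition sequent : Type := (list formula * list formula)%type.

Definition lweight (l : list formula) : nat := fold_right (fun f n => fweight f + n) 0 l.
Definition sweight (S : sequent) : nat := lweight (fst S) + lweight (snd S).

Definition seq_cat (S T : sequent) : sequent := (fst S ++ fst T, snd S ++ snd T).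

Definition seq_perm (S T : sequent) : Prop :=
  Permutation (fst S) (fst T) /\ Permutation (snd S) (snd T).

Inductive sign : Type := Pos | Neg.
Definition opp (s : sign) : sign := match s with Pos => Neg | Neg => Pos end.

Fixpoint vars (s : sign) (f : formula) : list nat :=
  match f with
  | Var n => match s with Pos => [n] | Neg => [] end
  | Bot => []
  | And a b | Or a b => vars s a ++ vars s b
  | Imp a b | Cond a b => vars (opp s) a ++ vars s b
  | Box a => vars s a
  end.

Definition allvars (f : formula) : list nat := vars Pos f ++ vars Neg f.

Definition svars (s : sign) (S : sequent) : list nat :=
  flat_map (vars (opp s)) (fst S) ++ flat_map (vars s) (snd S).

Definition sallvars (S : sequent) : list nat := svars Pos S ++ svars Neg S.

Inductive rule_name : Type :=
| RAx | RAxBot | RLAnd | RRAnd | RLOr | RROr | RLImp | RRImp | RLW | RRW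
| RE | RM | RMC | RN
| RCE | RCM | RCMC | RCN | RCKID | RCKCEM | RCKCEMID.

Definition cnd (c : formula * formula) : formula := Cond (fst c) (snd c).

Definition equivs (a0 : formula) (l : list (formula * formula)) : list sequent :=
  flat_map (fun c => [([a0], [fst c]); ([fst c], [a0])]) l.

Inductive inst0 : rule_name -> list sequent -> sequent -> Prop :=
| i_ax G D n : inst0 RAx [] (Var n :: G, Var n :: D)
| i_axbot G D : inst0 RAxBot [] (Bot :: G, D)
| i_land G D a b : inst0 RLAnd [(a :: b :: G, D)] (And a b :: G, D)
| i_rand G D a b : inst0 RRAnd [(G, a :: D); (G, b :: D)] (G, And a b :: D)
| i_lor G D a b : inst0 RLOr [(a :: G, D); (b :: G, D)] (Or a b :: G, D)
| i_ror G D a b : inst0 RROr [(G, a :: b :: D)] (G, Or a b :: D)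
| i_limp G D a b : inst0 RLImp [(G, a :: D); (b :: G, D)] (Imp a b :: G, D)
| i_rimp G D a b : inst0 RRImp [(a :: G, b :: D)] (G, Imp a b :: D)
| i_lw G D a : inst0 RLW [(G, D)] (a :: G, D)
| i_rw G D a : inst0 RRW [(G, D)] (G, a :: D)
| i_E a b : inst0 RE [([a], [b]); ([b], [a])] ([Box a], [Box b])
| i_M a b : inst0 RM [([a], [b])] ([Box a], [Box b])
| i_MC (a : formula) (l : list formula) (b : formula) :
    (* n >= 1 antecedent formulas a :: l *)
    inst0 RMC [(a :: l, [b])] (map Box (a :: l), [Box b])
| i_N b : inst0 RN [([], [b])] ([], [Box b])
| i_CE a0 a1 b0 b1 :
    inst0 RCE [([a0], [a1]); ([a1], [a0]); ([b0], [b1]); ([b1], [b0])]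
              ([Cond a1 b1], [Cond a0 b0])
| i_CM a0 a1 b0 b1 :
    inst0 RCM [([a0], [a1]); ([a1], [a0]); ([b1], [b0])]
              ([Cond a1 b1], [Cond a0 b0])
| i_CMC a0 b0 (c : formula * formula) (l : list (formula * formula)) :
    (* n >= 1 pairs c :: l *)
    inst0 RCMC (equivs a0 (c :: l) ++ [(map snd (c :: l), [b0])])
               (map cnd (c :: l), [Cond a0 b0])
| i_CN a0 b0 : inst0 RCN [([], [b0])] ([], [Cond a0 b0])
| i_CKID a0 b0 (l : list (formula * formula)) :
    inst0 RCKID (equivs a0 l ++ [(a0 :: map snd l, [b0])])
                (map cnd l, [Cond a0 b0])
| i_CKCEM a0 b0 (lI lJ : list (formula * formula)) :
    inst0 RCKCEM (equivs a0 (lI ++ lJ) ++ [(map snd lI, b0 :: map snd lJ)])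
                 (map cnd lI, Cond a0 b0 :: map cnd lJ)
| i_CKCEMID a0 b0 (lI lJ : list (formula * formula)) :
    inst0 RCKCEMID (equivs a0 (lI ++ lJ) ++ [(a0 :: map snd lI, b0 :: map snd lJ)])
                   (map cnd lI, Cond a0 b0 :: map cnd lJ).

Definition inst (r : rule_name) (prems : list sequent) (S : sequent) : Prop :=
  exists S0, inst0 r prems S0 /\ seq_perm S0 S.

Inductive calculus : Type :=
| GE | GM | GMC | GEN | GMN | GK
| GCE | GCM | GCMC | GCEN | GCMN | GCK | GCKID | GCKCEM | GCKCEMID.

Definition g3w_rule (r : rule_name) : Prop :=
  match r with
  | RAx | RAxBot | RLAnd | RRAnd | RLOr | RROr | RLImp | RRImp | RLW | RRW => True
  | _ => False
  end.

Definition modal_rules (G : calculus) (r : rule_name) : Prop :=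
  match G, r with
  | GE, RE | GM, RM | GMC, RMC => True
  | GEN, (RE | RN) | GMN, (RM | RN) | GK, (RMC | RN) => True
  | GCE, RCE | GCM, RCM | GCMC, RCMC => True
  | GCEN, (RCE | RCN) | GCMN, (RCM | RCN) | GCK, (RCMC | RCN) => True
  | GCKID, RCKID | GCKCEM, RCKCEM | GCKCEMID, RCKCEMID => True
  | _, _ => False
  end.

Definition rules (G : calculus) (r : rule_name) : Prop := g3w_rule r \/ modal_rules G r.

Inductive derivable (G : calculus) : sequent -> Prop :=
| der (r : rule_name) (prems : list sequent) (S : sequent) :
    rules G r -> inst r prems S ->
    (forall P, In P prems -> derivable G P) -> derivable G S.

Definition last_in (G : calculus) (R : rule_name -> Prop) (S : sequent) : Prop :=
  exists r prems, rules G r /\ R r /\ inst r prems S /\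
                  (forall P, In P prems -> derivable G P).

Fixpoint noCond (f : formula) : Prop :=
  match f with
  | Var _ | Bot => True
  | And a b | Or a b | Imp a b => noCond a /\ noCond b
  | Box a => noCond a
  | Cond _ _ => False
  end.

Fixpoint noBox (f : formula) : Prop :=
  match f with
  | Var _ | Bot => True
  | And a b | Or a b | Imp a b | Cond a b => noBox a /\ noBox b
  | Box _ => False
  end.

Definition modal_calculus (G : calculus) : bool :=
  match G with GE | GM | GMC | GEN | GMN | GK => true | _ => false end.

Definition inlang (G : calculus) (f : formula) : Prop :=
  if modal_calculus G then noCond f else noBox f.

Definition sinlang (G : calculus) (S : sequent) : Prop :=
  Forall (inlang G) (fst S) /\ Forall (inlang G) (snd S).

Definition ulip_base (G : calculus) (S : sequent) (p : nat) (s : sign)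
  (th : formula) : Prop :=
  inlang G th /\ ~ In p (vars s th) /\
  (forall t, incl (vars t th) (svars t S)) /\
  derivable G (seq_cat S ([th], [])).

Definition ulip_interp_wrt (G : calculus) (R : rule_name -> Prop) (S : sequent)
  (p : nat) (s : sign) (th : formula) : Prop :=
  ulip_base G S p s th /\
  forall Gm Dl, sinlang G (Gm, Dl) -> ~ In p (svars (opp s) (Gm, Dl)) ->
    last_in G R (seq_cat S (Gm, Dl)) -> derivable G (Gm, th :: Dl).

Definition ulip_interp (G : calculus) (S : sequent) (p : nat) (s : sign)
  (th : formula) : Prop :=
  ulip_base G S p s th /\
  forall Gm Dl, sinlang G (Gm, Dl) -> ~ In p (svars (opp s) (Gm, Dl)) ->
    derivable G (seq_cat S (Gm, Dl)) -> derivable G (Gm, th :: Dl).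

Definition ULIP (G : calculus) : Prop :=
  forall S p s, sinlang G S -> exists th, ulip_interp G S p s th.

Definition Ulower (G : calculus) (S : sequent) (p : nat) (s : sign) : Prop :=
  forall T, sinlang G T -> sweight T < sweight S -> exists th, ulip_interp G T p s th.

Definition MULIP (G : calculus) : Prop :=
  forall S p s, sinlang G S ->
    exists th, Ulower G S p s -> ulip_interp_wrt G (modal_rules G) S p s th.

Definition uip_base (G : calculus) (S : sequent) (p : nat) (th : formula) : Prop :=
  inlang G th /\ ~ In p (allvars th) /\
  incl (allvars th) (sallvars S) /\
  derivable G (seq_cat S ([th], [])).

Definition uip_interp_wrt (G : calculus) (R : rule_name -> Prop) (S : sequent)
  (p : nat) (th : formula) : Prop :=
  uip_base G S p th /\
  forall Gm Dl, sinlang G (Gm, Dl) -> ~ In p (sallvars (Gm, Dl)) ->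
    last_in G R (seq_cat S (Gm, Dl)) -> derivable G (Gm, th :: Dl).

Definition uip_interp (G : calculus) (S : sequent) (p : nat) (th : formula) : Prop :=
  uip_base G S p th /\
  forall Gm Dl, sinlang G (Gm, Dl) -> ~ In p (sallvars (Gm, Dl)) ->
    derivable G (seq_cat S (Gm, Dl)) -> derivable G (Gm, th :: Dl).

Definition UIP (G : calculus) : Prop :=
  forall S p, sinlang G S -> exists th, uip_interp G S p th.

Definition Ulower_np (G : calculus) (S : sequent) (p : nat) : Prop :=
  forall T, sinlang G T -> sweight T < sweight S -> exists th, uip_interp G T p th.

Definition MUIP (G : calculus) : Prop :=
  forall S p, sinlang G S ->
    exists th, Ulower_np G S p -> uip_interp_wrt G (modal_rules G) S p th.

(* Main.v *)
Require Import Defs.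
From Stdlib Require Import List Permutation Lia.
From Stdlib Require Classical_Prop.
Import ListNotations.

Ltac perm_norm := repeat (rewrite <- ?app_assoc, ?app_nil_r; simpl).

Ltac perm_go n :=
  match n with
  | O => fail 1
  | S ?m =>
  lazymatch goal with
  | |- Permutation ?L ?L => apply Permutation_refl
  | |- Permutation [] [] => apply Permutation_refl
  | |- Permutation (?x :: _) (?x :: _) => apply perm_skip; perm_norm; perm_go (S (S (S (S (S (S (S (S (S (S (S (S (S (S (S (S (S (S (S (S O))))))))))))))))))))
  | |- Permutation (?l ++ _) (?l ++ _) => apply Permutation_app_head; perm_norm; perm_go (S (S (S (S (S (S (S (S (S (S (S (S (S (S (S (S (S (S (S (S O))))))))))))))))))))
  | |- Permutation _ (?y :: ?R) =>
      eapply Permutation_trans; [| apply Permutation_sym, (Permutation_cons_append R y)];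
      perm_norm; perm_go m
  | |- Permutation _ (?l ++ ?R) =>
      eapply Permutation_trans; [| apply (Permutation_app_comm R l)];
      perm_norm; perm_go m
  end end.

Ltac psolve := perm_norm; perm_go (S (S (S (S (S (S (S (S (S (S (S (S (S (S (S (S (S (S (S (S O)))))))))))))))))))).



Lemma derivable_perm G S T : derivable G S -> seq_perm S T -> derivable G T.
Proof.
  intros H [H1 H2]. inversion H as [r prems S' Hr [S0 [Hi [Hp1 Hp2]]] Hd]; subst.
  eapply der; eauto. exists S0; split; auto. split; eapply Permutation_trans; eauto.
Qed.

Lemma der_rule G r prems S0 S : rules G r -> inst0 r prems S0 -> seq_perm S0 S ->
  (forall P, In P prems -> derivable G P) -> derivable G S.
Proof. intros. eapply der; eauto. exists S0; auto. Qed.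

Lemma perm_split {A} (x:A) G0 L M : Permutation (x::G0) (L ++ M) ->
  (exists L', Permutation L (x::L') /\ Permutation G0 (L'++M)) \/
  (exists M', Permutation M (x::M') /\ Permutation G0 (L ++ M')).
Proof.
  intros H. assert (Hin : In x (L ++ M)) by (eapply Permutation_in; eauto; left; auto).
  apply in_app_or in Hin as [Hin|Hin]; apply in_split in Hin as [l1 [l2 ->]].
  - left. exists (l1 ++ l2). split. psolve.
    rewrite <- app_assoc in H; simpl in H.
    apply Permutation_cons_app_inv in H. rewrite H. psolve.
  - right. exists (l1 ++ l2). split. psolve.
    rewrite app_assoc in H.
    apply Permutation_cons_app_inv in H. rewrite H. psolve.
Qed.

Lemma g3w G r : g3w_rule r -> rules G r.
Proof. left; auto. Qed.

Lemma inlang_and G a b : inlang G (And a b) <-> inlang G a /\ inlang G b.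
Proof. unfold inlang; destruct (modal_calculus G); simpl; tauto. Qed.
Lemma inlang_or G a b : inlang G (Or a b) <-> inlang G a /\ inlang G b.
Proof. unfold inlang; destruct (modal_calculus G); simpl; tauto. Qed.
Lemma inlang_imp G a b : inlang G (Imp a b) <-> inlang G a /\ inlang G b.
Proof. unfold inlang; destruct (modal_calculus G); simpl; tauto. Qed.
Lemma inlang_bot G : inlang G Bot.
Proof. unfold inlang; destruct (modal_calculus G); simpl; tauto. Qed.
Lemma inlang_var G n : inlang G (Var n).
Proof. unfold inlang; destruct (modal_calculus G); simpl; tauto. Qed.

Definition ssub S1 S2 := forall t, incl (svars t S1) (svars t S2).

Record params := mkP { pfree : formula -> Prop; pvincl : formula -> sequent -> Prop;
  pctx : sequent -> Prop }.

Definition top := Imp Bot Bot.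

Record props (P : params) : Prop := {
  f_bot : pfree P Bot; f_top : pfree P top;
  f_and : forall a b, pfree P a -> pfree P b -> pfree P (And a b);
  f_or : forall a b, pfree P a -> pfree P b -> pfree P (Or a b);
  f_var : forall n X, In (Var n) (fst X) -> pctx P X -> pfree P (Var n);
  f_neg : forall n X, In (Var n) (snd X) -> pctx P X -> pfree P (Imp (Var n) Bot);
  v_bot : forall S, pvincl P Bot S; v_top : forall S, pvincl P top S;
  v_and : forall a b S, pvincl P a S -> pvincl P b S -> pvincl P (And a b) S;
  v_or : forall a b S, pvincl P a S -> pvincl P b S -> pvincl P (Or a b) S;
  v_var : forall n S, In (Var n) (snd S) -> pvincl P (Var n) S;
  v_neg : forall n S, In (Var n) (fst S) -> pvincl P (Imp (Var n) Bot) S;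
  v_mono : forall th S1 S2, ssub S1 S2 -> pvincl P th S1 -> pvincl P th S2;
  c_mono : forall X1 X2, ssub X1 X2 -> pctx P X2 -> pctx P X1 }.

Definition gbase G P S th := inlang G th /\ pfree P th /\ pvincl P th S /\
  derivable G (seq_cat S ([th], [])).
Definition good G P X := sinlang G X /\ pctx P X.
Definition ginterp G P S th := gbase G P S th /\
  forall Gm Dl, sinlang G (Gm, Dl) -> pctx P (Gm, Dl) ->
    derivable G (seq_cat S (Gm, Dl)) -> derivable G (Gm, th :: Dl).
Definition gwrt G P S th := gbase G P S th /\
  forall Gm Dl, sinlang G (Gm, Dl) -> pctx P (Gm, Dl) ->
    last_in G (modal_rules G) (seq_cat S (Gm, Dl)) -> derivable G (Gm, th :: Dl).

Lemma svars_perm t G D G' D' : Permutation G G' -> Permutation D D' ->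
  incl (svars t (G, D)) (svars t (G', D')).
Proof.
  intros H1 H2 x Hx. unfold svars in *; simpl in *.
  apply in_app_or in Hx as [Hx|Hx]; apply in_or_app; [left|right];
  (eapply Permutation_in; [apply Permutation_flat_map| ]; eauto).
Qed.

Lemma ssub_perm G D G' D' : Permutation G G' -> Permutation D D' -> ssub (G, D) (G', D').
Proof. intros H1 H2 t; apply svars_perm; auto. Qed.

Lemma sinlang_perm G X Y : sinlang G X -> seq_perm X Y -> sinlang G Y.
Proof. intros [H1 H2] [P1 P2]; split; eapply Permutation_Forall; eauto. Qed.

Lemma good_perm G P Gm Dl Gm' Dl' : props P -> good G P (Gm, Dl) -> Permutation Gm Gm' ->
  Permutation Dl Dl' -> good G P (Gm', Dl').
Proof.
  intros HP [H1 H2] p1 p2; split.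
  - eapply sinlang_perm; eauto; split; auto.
  - eapply c_mono; eauto. apply ssub_perm; apply Permutation_sym; auto.
Qed.

Ltac ssub_tac := let t := fresh "t" in let x := fresh "x" in
  intros t x; destruct t; unfold svars; simpl; rewrite ?in_app_iff; tauto.



Ltac sl_tac :=
  let H1 := fresh in let H2 := fresh in
  intros [H1 H2]; simpl in H1, H2;
  repeat match goal with H : Forall _ (_ :: _) |- _ => inversion H; subst; clear H end;
  rewrite ?inlang_and, ?inlang_or, ?inlang_imp in *;
  split; [split; simpl; repeat constructor; tauto | ssub_tac].

Lemma sh_land G a b Gm D : sinlang G (And a b :: Gm, D) ->
  sinlang G (a::b::Gm, D) /\ ssub (a::b::Gm, D) (And a b :: Gm, D).
Proof. sl_tac. Qed.
Lemma sh_lor1 G a b Gm D : sinlang G (Or a b :: Gm, D) ->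
  sinlang G (a::Gm, D) /\ ssub (a::Gm, D) (Or a b :: Gm, D).
Proof. sl_tac. Qed.
Lemma sh_lor2 G a b Gm D : sinlang G (Or a b :: Gm, D) ->
  sinlang G (b::Gm, D) /\ ssub (b::Gm, D) (Or a b :: Gm, D).
Proof. sl_tac. Qed.
Lemma sh_limp1 G a b Gm D : sinlang G (Imp a b :: Gm, D) ->
  sinlang G (Gm, a::D) /\ ssub (Gm, a::D) (Imp a b :: Gm, D).
Proof. sl_tac. Qed.
Lemma sh_limp2 G a b Gm D : sinlang G (Imp a b :: Gm, D) ->
  sinlang G (b::Gm, D) /\ ssub (b::Gm, D) (Imp a b :: Gm, D).
Proof. sl_tac. Qed.
Lemma sh_rand1 G a b Gm D : sinlang G (Gm, And a b :: D) ->
  sinlang G (Gm, a::D) /\ ssub (Gm, a::D) (Gm, And a b :: D).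
Proof. sl_tac. Qed.
Lemma sh_rand2 G a b Gm D : sinlang G (Gm, And a b :: D) ->
  sinlang G (Gm, b::D) /\ ssub (Gm, b::D) (Gm, And a b :: D).
Proof. sl_tac. Qed.
Lemma sh_ror G a b Gm D : sinlang G (Gm, Or a b :: D) ->
  sinlang G (Gm, a::b::D) /\ ssub (Gm, a::b::D) (Gm, Or a b :: D).
Proof. sl_tac. Qed.
Lemma sh_rimp G a b Gm D : sinlang G (Gm, Imp a b :: D) ->
  sinlang G (a::Gm, b::D) /\ ssub (a::Gm, b::D) (Gm, Imp a b :: D).
Proof. sl_tac. Qed.
Lemma sh_lw G a Gm D : sinlang G (a :: Gm, D) ->
  sinlang G (Gm, D) /\ ssub (Gm, D) (a :: Gm, D).
Proof. sl_tac. Qed.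
Lemma sh_rw G a Gm D : sinlang G (Gm, a :: D) ->
  sinlang G (Gm, D) /\ ssub (Gm, D) (Gm, a :: D).
Proof. sl_tac. Qed.

Lemma good_sub G P X Y : props P -> good G P X -> sinlang G Y /\ ssub Y X -> good G P Y.
Proof. intros HP [H1 H2] [H3 H4]; split; auto. eapply c_mono; eauto. Qed.



Lemma inner G P A B th : props P ->
 (forall Gm Dl, good G P (Gm,Dl) -> forall f r, Permutation A (f::r) ->
   derivable G (r++Gm, B++Dl) -> derivable G (Gm, th::Dl)) ->
 (forall Gm Dl, good G P (Gm,Dl) -> forall f r, Permutation B (f::r) ->
   derivable G (A++Gm, r++Dl) -> derivable G (Gm, th::Dl)) ->
 (forall Gm Dl, good G P (Gm,Dl) -> forall a b r, Permutation A (And a b::r) ->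
   derivable G (a::b::r++Gm, B++Dl) -> derivable G (Gm, th::Dl)) ->
 (forall Gm Dl, good G P (Gm,Dl) -> forall a b r, Permutation A (Or a b::r) ->
   derivable G (a::r++Gm, B++Dl) -> derivable G (b::r++Gm, B++Dl) -> derivable G (Gm, th::Dl)) ->
 (forall Gm Dl, good G P (Gm,Dl) -> forall a b r, Permutation A (Imp a b::r) ->
   derivable G (r++Gm, a::B++Dl) -> derivable G (b::r++Gm, B++Dl) -> derivable G (Gm, th::Dl)) ->
 (forall Gm Dl, good G P (Gm,Dl) -> forall a b r, Permutation B (And a b::r) ->
   derivable G (A++Gm, a::r++Dl) -> derivable G (A++Gm, b::r++Dl) -> derivable G (Gm, th::Dl)) ->
 (forall Gm Dl, good G P (Gm,Dl) -> forall a b r, Permutation B (Or a b::r) ->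
   derivable G (A++Gm, a::b::r++Dl) -> derivable G (Gm, th::Dl)) ->
 (forall Gm Dl, good G P (Gm,Dl) -> forall a b r, Permutation B (Imp a b::r) ->
   derivable G (a::A++Gm, b::r++Dl) -> derivable G (Gm, th::Dl)) ->
 (forall Gm Dl n, In (Var n) A -> In (Var n) B -> derivable G (Gm, th::Dl)) ->
 (forall Gm Dl, good G P (Gm,Dl) -> forall n, In (Var n) A -> In (Var n) Dl -> derivable G (Gm, th::Dl)) ->
 (forall Gm Dl, good G P (Gm,Dl) -> forall n, In (Var n) B -> In (Var n) Gm -> derivable G (Gm, th::Dl)) ->
 (forall Gm Dl, In Bot A -> derivable G (Gm, th::Dl)) ->
 (forall Gm Dl, good G P (Gm,Dl) -> last_in G (modal_rules G) (A++Gm, B++Dl) -> derivable G (Gm, th::Dl)) ->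
 forall X, derivable G X -> forall Gm Dl, seq_perm X (A++Gm, B++Dl) -> good G P (Gm,Dl) ->
   derivable G (Gm, th::Dl).
Proof.
  intros HP Cwl Cwr Candl Corl Cimpl Candr Corr Cimpr Css Csl Csr Cbot Cmod.
  intros X Hd. induction Hd as [r prems X Hr Hi Hprem IH].
  intros Gm Dl Hp Hg.
  destruct Hr as [Hr|Hr].
  2:{ apply Cmod; auto. exists r, prems. split; [right; auto|]. split; auto. split; auto.
      destruct Hi as [S0 [Hi [q1 q2]]]. exists S0; split; auto. destruct Hp as [p1 p2].
      split; eapply Permutation_trans; eauto. }
  destruct Hi as [S0 [Hi [q1 q2]]]. destruct Hp as [p1 p2].
  pose proof (Permutation_trans q1 p1) as E1. pose proof (Permutation_trans q2 p2) as E2.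
  clear q1 q2 p1 p2.
  destruct r; try contradiction Hr; inversion Hi; subst; simpl in E1, E2.
  -
    destruct (perm_split _ _ _ _ E1) as [[A' [HA HG]]|[Gm' [HG HG0]]];
    destruct (perm_split _ _ _ _ E2) as [[B' [HB HD]]|[Dl' [HD HD0]]].
    + apply (Css _ _ n); [rewrite HA|rewrite HB]; left; auto.
    + apply (Csl _ _ Hg n); [rewrite HA|rewrite HD]; left; auto.
    + apply (Csr _ _ Hg n); [rewrite HB|rewrite HG]; left; auto.
    + eapply (der_rule G RAx); [left; exact I| apply (i_ax Gm' (th::Dl') n)| |].
      * split; simpl; [rewrite HG|rewrite HD]; psolve.
      * intros P0 [].
  -
    destruct (perm_split _ _ _ _ E1) as [[A' [HA HG]]|[Gm' [HG HG0]]].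
    + apply Cbot; rewrite HA; left; auto.
    + eapply (der_rule G RAxBot); [left; exact I| apply (i_axbot Gm' (th::Dl))| |].
      * split; simpl; [rewrite HG|]; psolve.
      * intros P0 [].
  -
    destruct (perm_split _ _ _ _ E1) as [[A' [HA HG]]|[Gm' [HG HG0]]].
    + apply (Candl _ _ Hg a b A' HA). eapply derivable_perm; [apply Hprem; left; eauto|].
      split; simpl; [rewrite HG|rewrite E2]; psolve.
    + assert (Hg1 : good G P (And a b :: Gm', Dl)) by (eapply good_perm; eauto).
      assert (Hd : derivable G (a::b::Gm', th::Dl)).
      { eapply (IH _ (or_introl eq_refl)).
        - split; simpl; [rewrite HG0|rewrite E2]; psolve.
        - eapply good_sub; eauto. apply sh_land; apply Hg1. }
      eapply (der_rule G RLAnd); [left; exact I| apply (i_land Gm' (th::Dl) a b)| |].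
      * split; simpl; [rewrite HG|]; psolve.
      * intros P0 [<-|[]]; auto.
  -
    destruct (perm_split _ _ _ _ E2) as [[B' [HB HD]]|[Dl' [HD HD0]]].
    + apply (Candr _ _ Hg a b B' HB).
      * eapply derivable_perm; [apply Hprem; left; eauto|].
        split; simpl; [rewrite E1|rewrite HD]; psolve.
      * eapply derivable_perm; [apply Hprem; right; left; eauto|].
        split; simpl; [rewrite E1|rewrite HD]; psolve.
    + assert (Hg1 : good G P (Gm, And a b :: Dl')) by (eapply good_perm; eauto).
      assert (Hd1 : derivable G (Gm, th::a::Dl')).
      { eapply (IH _ (or_introl eq_refl)).
        - split; simpl; [rewrite E1|rewrite HD0]; psolve.
        - eapply good_sub; eauto. apply sh_rand1; apply Hg1. }
      assert (Hd2 : derivable G (Gm, th::b::Dl')).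
      { eapply (IH _ (or_intror (or_introl eq_refl))).
        - split; simpl; [rewrite E1|rewrite HD0]; psolve.
        - eapply good_sub; eauto. apply sh_rand2; apply Hg1. }
      eapply (der_rule G RRAnd); [left; exact I| apply (i_rand Gm (th::Dl') a b)| |].
      * split; simpl; [|rewrite HD]; psolve.
      * intros P0 [<-|[<-|[]]]; [eapply derivable_perm; [exact Hd1|split; simpl; psolve]|eapply derivable_perm; [exact Hd2|split; simpl; psolve]].
  -
    destruct (perm_split _ _ _ _ E1) as [[A' [HA HG]]|[Gm' [HG HG0]]].
    + apply (Corl _ _ Hg a b A' HA).
      * eapply derivable_perm; [apply Hprem; left; eauto|].
        split; simpl; [rewrite HG|rewrite E2]; psolve.
      * eapply derivable_perm; [apply Hprem; right; left; eauto|].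
        split; simpl; [rewrite HG|rewrite E2]; psolve.
    + assert (Hg1 : good G P (Or a b :: Gm', Dl)) by (eapply good_perm; eauto).
      assert (Hd1 : derivable G (a::Gm', th::Dl)).
      { eapply (IH _ (or_introl eq_refl)).
        - split; simpl; [rewrite HG0|rewrite E2]; psolve.
        - eapply good_sub; eauto. apply sh_lor1; apply Hg1. }
      assert (Hd2 : derivable G (b::Gm', th::Dl)).
      { eapply (IH _ (or_intror (or_introl eq_refl))).
        - split; simpl; [rewrite HG0|rewrite E2]; psolve.
        - eapply good_sub; eauto. apply sh_lor2; apply Hg1. }
      eapply (der_rule G RLOr); [left; exact I| apply (i_lor Gm' (th::Dl) a b)| |].
      * split; simpl; [rewrite HG|]; psolve.
      * intros P0 [<-|[<-|[]]]; auto.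
  -
    destruct (perm_split _ _ _ _ E2) as [[B' [HB HD]]|[Dl' [HD HD0]]].
    + apply (Corr _ _ Hg a b B' HB).
      eapply derivable_perm; [apply Hprem; left; eauto|].
      split; simpl; [rewrite E1|rewrite HD]; psolve.
    + assert (Hg1 : good G P (Gm, Or a b :: Dl')) by (eapply good_perm; eauto).
      assert (Hd1 : derivable G (Gm, th::a::b::Dl')).
      { eapply (IH _ (or_introl eq_refl)).
        - split; simpl; [rewrite E1|rewrite HD0]; psolve.
        - eapply good_sub; eauto. apply sh_ror; apply Hg1. }
      eapply (der_rule G RROr); [left; exact I| apply (i_ror Gm (th::Dl') a b)| |].
      * split; simpl; [|rewrite HD]; psolve.
      * intros P0 [<-|[]]; eapply derivable_perm; [exact Hd1|split; simpl; psolve].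
  -
    destruct (perm_split _ _ _ _ E1) as [[A' [HA HG]]|[Gm' [HG HG0]]].
    + apply (Cimpl _ _ Hg a b A' HA).
      * eapply derivable_perm; [apply Hprem; left; eauto|].
        split; simpl; [rewrite HG|rewrite E2]; psolve.
      * eapply derivable_perm; [apply Hprem; right; left; eauto|].
        split; simpl; [rewrite HG|rewrite E2]; psolve.
    + assert (Hg1 : good G P (Imp a b :: Gm', Dl)) by (eapply good_perm; eauto).
      assert (Hd1 : derivable G (Gm', th::a::Dl)).
      { eapply (IH _ (or_introl eq_refl)).
        - split; simpl; [rewrite HG0|rewrite E2]; psolve.
        - eapply good_sub; eauto. apply sh_limp1; apply Hg1. }
      assert (Hd2 : derivable G (b::Gm', th::Dl)).
      { eapply (IH _ (or_intror (or_introl eq_refl))).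
        - split; simpl; [rewrite HG0|rewrite E2]; psolve.
        - eapply good_sub; eauto. apply sh_limp2; apply Hg1. }
      eapply (der_rule G RLImp); [left; exact I| apply (i_limp Gm' (th::Dl) a b)| |].
      * split; simpl; [rewrite HG|]; psolve.
      * intros P0 [<-|[<-|[]]]; [eapply derivable_perm; [exact Hd1|split; simpl; psolve]|eapply derivable_perm; [exact Hd2|split; simpl; psolve]].
  -
    destruct (perm_split _ _ _ _ E2) as [[B' [HB HD]]|[Dl' [HD HD0]]].
    + apply (Cimpr _ _ Hg a b B' HB).
      eapply derivable_perm; [apply Hprem; left; eauto|].
      split; simpl; [rewrite E1|rewrite HD]; psolve.
    + assert (Hg1 : good G P (Gm, Imp a b :: Dl')) by (eapply good_perm; eauto).
      assert (Hd1 : derivable G (a::Gm, th::b::Dl')).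
      { eapply (IH _ (or_introl eq_refl)).
        - split; simpl; [rewrite E1|rewrite HD0]; psolve.
        - eapply good_sub; eauto. apply sh_rimp; apply Hg1. }
      eapply (der_rule G RRImp); [left; exact I| apply (i_rimp Gm (th::Dl') a b)| |].
      * split; simpl; [|rewrite HD]; psolve.
      * intros P0 [<-|[]]; eapply derivable_perm; [exact Hd1|split; simpl; psolve].
  -
    destruct (perm_split _ _ _ _ E1) as [[A' [HA HG]]|[Gm' [HG HG0]]].
    + apply (Cwl _ _ Hg a A' HA).
      eapply derivable_perm; [apply Hprem; left; eauto|].
      split; simpl; [rewrite HG|rewrite E2]; psolve.
    + assert (Hg1 : good G P (a :: Gm', Dl)) by (eapply good_perm; eauto).
      assert (Hd1 : derivable G (Gm', th::Dl)).
      { eapply (IH _ (or_introl eq_refl)).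
        - split; simpl; [rewrite HG0|rewrite E2]; psolve.
        - eapply good_sub; eauto. apply sh_lw; apply Hg1. }
      eapply (der_rule G RLW); [left; exact I| apply (i_lw Gm' (th::Dl) a)| |].
      * split; simpl; [rewrite HG|]; psolve.
      * intros P0 [<-|[]]; auto.
  -
    destruct (perm_split _ _ _ _ E2) as [[B' [HB HD]]|[Dl' [HD HD0]]].
    + apply (Cwr _ _ Hg a B' HB).
      eapply derivable_perm; [apply Hprem; left; eauto|].
      split; simpl; [rewrite E1|rewrite HD]; psolve.
    + assert (Hg1 : good G P (Gm, a :: Dl')) by (eapply good_perm; eauto).
      assert (Hd1 : derivable G (Gm, th::Dl')).
      { eapply (IH _ (or_introl eq_refl)).
        - split; simpl; [rewrite E1|rewrite HD0]; psolve.
        - eapply good_sub; eauto. apply sh_rw; apply Hg1. }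
      eapply (der_rule G RRW); [left; exact I| apply (i_rw Gm (th::Dl') a)| |].
      * split; simpl; [|rewrite HD]; psolve.
      * intros P0 [<-|[]]; auto.
Qed.


Lemma weak_app G G1 D1 E1 E2 : derivable G (G1, D1) -> derivable G (G1 ++ E1, D1 ++ E2).
Proof.
  intros H. induction E1 as [|e E1 IH].
  - induction E2 as [|e E2 IH]; [rewrite !app_nil_r; auto|].
    eapply (der_rule G RRW); [left; exact I| apply (i_rw G1 (D1 ++ E2) e)| |].
    + split; simpl; psolve.
    + intros P0 [<-|[]]; rewrite app_nil_r in IH; auto.
  - eapply (der_rule G RLW); [left; exact I| apply (i_lw (G1 ++ E1) (D1 ++ E2) e)| |].
    + split; simpl; psolve.
    + intros P0 [<-|[]]; auto.
Qed.

Lemma weak G G1 D1 G2 D2 E1 E2 : derivable G (G1, D1) ->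
  Permutation (G1 ++ E1) G2 -> Permutation (D1 ++ E2) D2 -> derivable G (G2, D2).
Proof. intros H p1 p2. eapply derivable_perm; [apply (weak_app _ _ _ E1 E2 H)|split; auto]. Qed.

Fixpoint bigOr (L : list formula) : formula :=
  match L with [] => Bot | c :: L' => Or c (bigOr L') end.

Lemma bigOr_base G P S L : props P -> Forall (gbase G P S) L -> gbase G P S (bigOr L).
Proof.
  intros HP H; induction H as [|c L Hc HL IH]; simpl.
  - split; [apply inlang_bot|]. split; [apply (f_bot _ HP)|]. split; [apply (v_bot _ HP)|].
    eapply (der_rule G RAxBot); [left; exact I| apply (i_axbot (fst S) (snd S))| |].
    + split; simpl; psolve.
    + intros P0 [].
  - destruct Hc as [i1 [f1 [v1 d1]]]. destruct IH as [i2 [f2 [v2 d2]]].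
    split; [apply inlang_or; auto|]. split; [apply (f_or _ HP); auto|].
    split; [apply (v_or _ HP); auto|].
    eapply (der_rule G RLOr); [left; exact I| apply (i_lor (fst S) (snd S) c (bigOr L))| |].
    + split; simpl; psolve.
    + intros P0 [<-|[<-|[]]]; eapply derivable_perm; [exact d1| |exact d2|];
      split; simpl; psolve.
Qed.

Lemma bigOr_intro G L c Gm Dl : In c L -> derivable G (Gm, c :: Dl) ->
  derivable G (Gm, bigOr L :: Dl).
Proof.
  revert c; induction L as [|c0 L IH]; intros c Hin Hd; [destruct Hin|].
  simpl. eapply (der_rule G RROr); [left; exact I| apply (i_ror Gm Dl c0 (bigOr L))| |].
  - split; simpl; psolve.
  - intros P0 [<-|[]]. destruct Hin as [<-|Hin].
    + eapply weak; [exact Hd| |]; [rewrite app_nil_r; apply Permutation_refl|].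
      instantiate (1 := [bigOr L]); psolve.
    + eapply weak; [exact (IH _ Hin Hd)| |]; [rewrite app_nil_r; apply Permutation_refl|].
      instantiate (1 := [c0]); psolve.
Qed.

Definition covers G L Gm Dl := exists c, In c L /\ derivable G (Gm, c :: Dl).

Lemma covers_mono G L1 L2 Gm Dl : incl L1 L2 -> covers G L1 Gm Dl -> covers G L2 Gm Dl.
Proof. intros H [c [h d]]; exists c; auto. Qed.

Lemma covers_bigOr G L Gm Dl : covers G L Gm Dl -> derivable G (Gm, bigOr L :: Dl).
Proof. intros [c [h d]]; eapply bigOr_intro; eauto. Qed.

Lemma collect {X} (l : list X) (Cov : X -> list formula -> Prop) (Q : formula -> Prop) :
  (forall x L1 L2, incl L1 L2 -> Cov x L1 -> Cov x L2) ->
  (forall x, In x l -> exists Lx, Forall Q Lx /\ Cov x Lx) ->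
  exists L, Forall Q L /\ forall x, In x l -> Cov x L.
Proof.
  intros Hm H; induction l as [|x l IH].
  - exists []; split; auto. intros x [].
  - destruct (H x (or_introl eq_refl)) as [Lx [q c]].
    destruct IH as [L [q2 c2]]; [intros; apply H; right; auto|].
    exists (Lx ++ L); split; [apply Forall_app; auto|].
    intros y [<-|Hy]; eapply Hm; [| exact c| |exact (c2 _ Hy)]; intros z Hz; apply in_or_app; auto.
Qed.

Fixpoint picks {A} (l : list A) : list (A * list A) :=
  match l with
  | [] => []
  | x :: l' => (x, l') :: map (fun p => (fst p, x :: snd p)) (picks l')
  end.

Lemma picks_sound {A} (l : list A) x r : In (x, r) (picks l) -> Permutation l (x :: r).
Proof.
  revert x r; induction l as [|y l IH]; intros x r H; [destruct H|].
  destruct H as [H|H]; [inversion H; subst; auto|].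
  apply in_map_iff in H as [[x' r'] [E H]]; simpl in E; inversion E; subst.
  apply IH in H. rewrite H. apply perm_swap.
Qed.

Lemma picks_l1 {A} (l1 l2 : list A) x : In (x, l1 ++ l2) (picks (l1 ++ x :: l2)).
Proof.
  induction l1 as [|y l1 IH]; simpl; [left; auto|].
  right. apply in_map_iff. exists (x, l1 ++ l2); auto.
Qed.

Lemma picks_complete {A} (l : list A) x r : Permutation l (x :: r) ->
  exists r', In (x, r') (picks l) /\ Permutation r r'.
Proof.
  intros H. assert (Hin : In x l) by (apply Permutation_sym in H; eapply Permutation_in; eauto; left; auto).
  apply in_split in Hin as [l1 [l2 ->]]. exists (l1 ++ l2); split; [apply picks_l1|].
  apply Permutation_sym in H. apply Permutation_cons_app_inv in H. auto.
Qed.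


Definition slen (S : sequent) := length (fst S) + length (snd S).
Definition lower T S := sweight T < sweight S \/ (sweight T = sweight S /\ slen T < slen S).

Lemma lweight_perm l l' : Permutation l l' -> lweight l = lweight l'.
Proof. induction 1; simpl; lia. Qed.

Lemma ssub_trans X Y Z : ssub X Y -> ssub Y Z -> ssub X Z.
Proof. intros h1 h2 t x hx; apply h2, h1, hx. Qed.


Definition CovLp G P (A B : list formula) (f : formula) (r : list formula) (L : list formula) := forall Gm Dl, good G P (Gm, Dl) ->
 (derivable G (r++Gm, B++Dl) -> covers G L Gm Dl) /\
 (forall a b, f = And a b -> derivable G (a::b::r++Gm, B++Dl) -> covers G L Gm Dl) /\
 (forall a b, f = Or a b -> derivable G (a::r++Gm, B++Dl) -> derivable G (b::r++Gm, B++Dl) -> covers G L Gm Dl) /\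
 (forall a b, f = Imp a b -> derivable G (r++Gm, a::B++Dl) -> derivable G (b::r++Gm, B++Dl) -> covers G L Gm Dl) /\
 (forall n, f = Var n -> In (Var n) Dl -> covers G L Gm Dl).

Definition CovRp G P (A B : list formula) (f : formula) (r : list formula) (L : list formula) := forall Gm Dl, good G P (Gm, Dl) ->
 (derivable G (A++Gm, r++Dl) -> covers G L Gm Dl) /\
 (forall a b, f = And a b -> derivable G (A++Gm, a::r++Dl) -> derivable G (A++Gm, b::r++Dl) -> covers G L Gm Dl) /\
 (forall a b, f = Or a b -> derivable G (A++Gm, a::b::r++Dl) -> covers G L Gm Dl) /\
 (forall a b, f = Imp a b -> derivable G (a::A++Gm, b::r++Dl) -> covers G L Gm Dl) /\
 (forall n, f = Var n -> In (Var n) Gm -> covers G L Gm Dl).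

Lemma dcat G A B th : derivable G (seq_cat (A, B) ([th], [])) -> derivable G (A ++ [th], B).
Proof. unfold seq_cat; simpl; rewrite app_nil_r; auto. Qed.
Lemma dcat' G A B th : derivable G (A ++ [th], B) -> derivable G (seq_cat (A, B) ([th], [])).
Proof. unfold seq_cat; simpl; rewrite app_nil_r; auto. Qed.

Ltac lower_tac HA :=
  unfold lower, sweight, slen; simpl;
  rewrite ?(lweight_perm _ _ HA), ?(Permutation_length HA); simpl; lia.



Lemma ssubA A A' B : Permutation A A' -> ssub (A', B) (A, B).
Proof. intros H; apply ssub_perm; [apply Permutation_sym; auto| apply Permutation_refl]. Qed.
Lemma ssubB A B B' : Permutation B B' -> ssub (A, B') (A, B).
Proof. intros H; apply ssub_perm; [apply Permutation_refl|apply Permutation_sym; auto]. Qed.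

Ltac get_cand Hlow T sh HA Hs t i f v d c :=
  destruct (Hlow T) as [t [[i [f [v d]]] c]];
  [ eapply proj1; apply sh; eapply sinlang_perm; [exact Hs| split; simpl; try exact HA; apply Permutation_refl]
  | lower_tac HA | ];
  apply dcat in d.

Ltac vtac HP sh HA vv :=
  eapply (v_mono _ HP); [eapply ssub_trans; [eapply proj2; apply sh; eapply sinlang_perm; [eassumption| split; simpl; try exact HA; apply Permutation_refl] | first [apply ssubA; exact HA | apply ssubB; exact HA]] | exact vv].

Lemma left_pick G P A B f r : props P -> sinlang G (A,B) -> Permutation A (f::r) ->
 (forall T, sinlang G T -> lower T (A,B) -> exists th, ginterp G P T th) ->
 exists Lx, Forall (gbase G P (A,B)) Lx /\ CovLp G P A B f r Lx.
Proof.
  intros HP Hs HA Hlow.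
  get_cand Hlow (r, B) sh_lw HA Hs tw iw fw vw dw cw.
  assert (Bw : gbase G P (A, B) tw).
  { split; [auto|]; split; [auto|]; split; [vtac HP sh_lw HA vw|].
    apply dcat'. eapply weak; [exact dw| |]. instantiate (1 := [f]). rewrite HA; psolve.
    instantiate (1 := []); psolve. }
  assert (Cw : forall Gm Dl, good G P (Gm, Dl) -> derivable G (r++Gm, B++Dl) -> covers G [tw] Gm Dl).
  { intros Gm Dl [h1 h2] hd. exists tw; split; [left; auto|]. apply cw; auto. }
  destruct f as [n| |a b|a b|a b|a|a b].
  -
    destruct (Classical_Prop.classic (pfree P (Imp (Var n) Bot))) as [Hf|Hf].
    + exists [tw; Imp (Var n) Bot]. split.
      * constructor; [auto|]. constructor; [|constructor].
        split; [apply inlang_imp; split; [apply inlang_var|apply inlang_bot]|].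
        split; [auto|]. split; [apply (v_neg _ HP); simpl; rewrite HA; left; auto|].
        apply dcat'.
        eapply (der_rule G RLImp); [left; exact I| apply (i_limp A B (Var n) Bot)| |].
        -- split; simpl; psolve.
        -- intros P0 [<-|[<-|[]]].
           ++ eapply (der_rule G RAx); [left; exact I| apply (i_ax r B n)| |].
              split; simpl; [rewrite HA|]; psolve. intros P0 [].
           ++ eapply (der_rule G RAxBot); [left; exact I| apply (i_axbot A B)| |].
              split; simpl; psolve. intros P0 [].
      * intros Gm Dl Hg. split; [intros hd; eapply covers_mono; [|apply (Cw _ _ Hg hd)]; intros z [<-|[]]; left; auto|].
        split; [intros; discriminate|]. split; [intros; discriminate|]. split; [intros; discriminate|].
        intros m Em Hin. inversion Em; subst. exists (Imp (Var m) Bot); split; [right; left; auto|].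
        apply in_split in Hin as [d1 [d2 ->]].
        eapply (der_rule G RRImp); [left; exact I| apply (i_rimp Gm (d1 ++ Var m :: d2) (Var m) Bot)| |].
        -- split; simpl; psolve.
        -- intros P0 [<-|[]].
           eapply (der_rule G RAx); [left; exact I| apply (i_ax Gm (Bot :: d1 ++ d2) m)| |].
           split; simpl; psolve. intros P0 [].
    + exists [tw]. split; [constructor; auto|].
      intros Gm Dl Hg. split; [intros hd; apply (Cw _ _ Hg hd)|].
      split; [intros; discriminate|]. split; [intros; discriminate|]. split; [intros; discriminate|].
      intros m Em Hin. inversion Em; subst. exfalso; apply Hf.
      apply (f_neg _ HP m (Gm, Dl)); [exact Hin| apply Hg].
  - exists [tw]. split; [constructor; auto|].
    intros Gm Dl Hg. split; [intros hd; apply (Cw _ _ Hg hd)|].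
    repeat split; intros; discriminate.
  -
    get_cand Hlow (a::b::r, B) sh_land HA Hs t1 i1 f1 v1 d1 c1.
    exists [tw; t1]. split.
    + constructor; [auto|]. constructor; [|constructor].
      split; [auto|]; split; [auto|]; split; [vtac HP sh_land HA v1|].
      apply dcat'.
      eapply (der_rule G RLAnd); [left; exact I| apply (i_land (r ++ [t1]) B a b)| |].
      * split; simpl; [rewrite HA|]; psolve.
      * intros P0 [<-|[]]; auto.
    + intros Gm Dl Hg. split; [intros hd; eapply covers_mono; [|apply (Cw _ _ Hg hd)]; intros z [<-|[]]; left; auto|].
      split; [|repeat split; intros; discriminate].
      intros a' b' E hd; inversion E; subst. exists t1; split; [right; left; auto|].
      apply c1; try apply Hg. exact hd.
  -
    get_cand Hlow (a::r, B) sh_lor1 HA Hs t1 i1 f1 v1 d1 c1.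
    get_cand Hlow (b::r, B) sh_lor2 HA Hs t2 i2 f2 v2 d2 c2.
    exists [tw; And t1 t2]. split.
    + constructor; [auto|]. constructor; [|constructor].
      split; [apply inlang_and; auto|]; split; [apply (f_and _ HP); auto|].
      split; [apply (v_and _ HP); [vtac HP sh_lor1 HA v1|vtac HP sh_lor2 HA v2]|].
      apply dcat'.
      eapply (der_rule G RLAnd); [left; exact I| apply (i_land A B t1 t2)| |].
      * split; simpl; psolve.
      * intros P0 [<-|[]].
        eapply (der_rule G RLOr); [left; exact I| apply (i_lor (t1 :: t2 :: r) B a b)| |].
        -- split; simpl; [rewrite HA|]; psolve.
        -- intros P0 [<-|[<-|[]]]; eapply weak; [exact d1| | |exact d2| |].
           instantiate (1 := [t2]); psolve. instantiate (1 := []); psolve.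
           instantiate (1 := [t1]); psolve. instantiate (1 := []); psolve.
    + intros Gm Dl Hg. split; [intros hd; eapply covers_mono; [|apply (Cw _ _ Hg hd)]; intros z [<-|[]]; left; auto|].
      split; [intros; discriminate|]. split; [|repeat split; intros; discriminate].
      intros a' b' E hd1 hd2; inversion E; subst. exists (And t1 t2); split; [right; left; auto|].
      apply c1 in hd1; try apply Hg. apply c2 in hd2; try apply Hg.
      eapply (der_rule G RRAnd); [left; exact I| apply (i_rand Gm Dl t1 t2)| |].
      * split; simpl; psolve.
      * intros P0 [<-|[<-|[]]]; auto.
  -
    get_cand Hlow (r, a::B) sh_limp1 HA Hs t1 i1 f1 v1 d1 c1.
    get_cand Hlow (b::r, B) sh_limp2 HA Hs t2 i2 f2 v2 d2 c2.
    exists [tw; And t1 t2]. split.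
    + constructor; [auto|]. constructor; [|constructor].
      split; [apply inlang_and; auto|]; split; [apply (f_and _ HP); auto|].
      split; [apply (v_and _ HP); [vtac HP sh_limp1 HA v1|vtac HP sh_limp2 HA v2]|].
      apply dcat'.
      eapply (der_rule G RLAnd); [left; exact I| apply (i_land A B t1 t2)| |].
      * split; simpl; psolve.
      * intros P0 [<-|[]].
        eapply (der_rule G RLImp); [left; exact I| apply (i_limp (t1 :: t2 :: r) B a b)| |].
        -- split; simpl; [rewrite HA|]; psolve.
        -- intros P0 [<-|[<-|[]]]; eapply weak; [exact d1| | |exact d2| |].
           instantiate (1 := [t2]); psolve. instantiate (1 := []); psolve.
           instantiate (1 := [t1]); psolve. instantiate (1 := []); psolve.
    + intros Gm Dl Hg. split; [intros hd; eapply covers_mono; [|apply (Cw _ _ Hg hd)]; intros z [<-|[]]; left; auto|].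
      split; [intros; discriminate|]. split; [intros; discriminate|]. split; [|intros; discriminate].
      intros a' b' E hd1 hd2; inversion E; subst. exists (And t1 t2); split; [right; left; auto|].
      apply c1 in hd1; try apply Hg. apply c2 in hd2; try apply Hg.
      eapply (der_rule G RRAnd); [left; exact I| apply (i_rand Gm Dl t1 t2)| |].
      * split; simpl; psolve.
      * intros P0 [<-|[<-|[]]]; auto.
  - exists [tw]. split; [constructor; auto|].
    intros Gm Dl Hg. split; [intros hd; apply (Cw _ _ Hg hd)|].
    repeat split; intros; discriminate.
  - exists [tw]. split; [constructor; auto|].
    intros Gm Dl Hg. split; [intros hd; apply (Cw _ _ Hg hd)|].
    repeat split; intros; discriminate.
Qed.


Lemma right_pick G P A B f r : props P -> sinlang G (A,B) -> Permutation B (f::r) ->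
 (forall T, sinlang G T -> lower T (A,B) -> exists th, ginterp G P T th) ->
 exists Lx, Forall (gbase G P (A,B)) Lx /\ CovRp G P A B f r Lx.
Proof.
  intros HP Hs HA Hlow.
  get_cand Hlow (A, r) sh_rw HA Hs tw iw fw vw dw cw.
  assert (Bw : gbase G P (A, B) tw).
  { split; [auto|]; split; [auto|]; split; [vtac HP sh_rw HA vw|].
    apply dcat'. eapply weak; [exact dw| |]. instantiate (1 := []); psolve.
    instantiate (1 := [f]). rewrite HA; psolve. }
  assert (Cw : forall Gm Dl, good G P (Gm, Dl) -> derivable G (A++Gm, r++Dl) -> covers G [tw] Gm Dl).
  { intros Gm Dl [h1 h2] hd. exists tw; split; [left; auto|]. apply cw; auto. }
  destruct f as [n| |a b|a b|a b|a|a b].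
  -
    destruct (Classical_Prop.classic (pfree P (Var n))) as [Hf|Hf].
    + exists [tw; Var n]. split.
      * constructor; [auto|]. constructor; [|constructor].
        split; [apply inlang_var|].
        split; [auto|]. split; [apply (v_var _ HP); simpl; rewrite HA; left; auto|].
        apply dcat'.
        eapply (der_rule G RAx); [left; exact I| apply (i_ax A r n)| |].
        -- split; simpl; [|rewrite HA]; psolve.
        -- intros P0 [].
      * intros Gm Dl Hg. split; [intros hd; eapply covers_mono; [|apply (Cw _ _ Hg hd)]; intros z [<-|[]]; left; auto|].
        split; [intros; discriminate|]. split; [intros; discriminate|]. split; [intros; discriminate|].
        intros m Em Hin. inversion Em; subst. exists (Var m); split; [right; left; auto|].
        apply in_split in Hin as [d1 [d2 ->]].
        eapply (der_rule G RAx); [left; exact I| apply (i_ax (d1 ++ d2) Dl m)| |].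
        -- split; simpl; psolve.
        -- intros P0 [].
    + exists [tw]. split; [constructor; auto|].
      intros Gm Dl Hg. split; [intros hd; apply (Cw _ _ Hg hd)|].
      split; [intros; discriminate|]. split; [intros; discriminate|]. split; [intros; discriminate|].
      intros m Em Hin. inversion Em; subst. exfalso; apply Hf.
      apply (f_var _ HP m (Gm, Dl)); [exact Hin| apply Hg].
  - exists [tw]. split; [constructor; auto|].
    intros Gm Dl Hg. split; [intros hd; apply (Cw _ _ Hg hd)|].
    repeat split; intros; discriminate.
  -
    get_cand Hlow (A, a::r) sh_rand1 HA Hs t1 i1 f1 v1 d1 c1.
    get_cand Hlow (A, b::r) sh_rand2 HA Hs t2 i2 f2 v2 d2 c2.
    exists [tw; And t1 t2]. split.
    + constructor; [auto|]. constructor; [|constructor].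
      split; [apply inlang_and; auto|]; split; [apply (f_and _ HP); auto|].
      split; [apply (v_and _ HP); [vtac HP sh_rand1 HA v1|vtac HP sh_rand2 HA v2]|].
      apply dcat'.
      eapply (der_rule G RLAnd); [left; exact I| apply (i_land A B t1 t2)| |].
      * split; simpl; psolve.
      * intros P0 [<-|[]].
        eapply (der_rule G RRAnd); [left; exact I| apply (i_rand (t1 :: t2 :: A) r a b)| |].
        -- split; simpl; [|rewrite HA]; psolve.
        -- intros P0 [<-|[<-|[]]]; eapply weak; [exact d1| | |exact d2| |].
           instantiate (1 := [t2]); psolve. instantiate (1 := []); psolve.
           instantiate (1 := [t1]); psolve. instantiate (1 := []); psolve.
    + intros Gm Dl Hg. split; [intros hd; eapply covers_mono; [|apply (Cw _ _ Hg hd)]; intros z [<-|[]]; left; auto|].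
      split; [|repeat split; intros; discriminate].
      intros a' b' E hd1 hd2; inversion E; subst. exists (And t1 t2); split; [right; left; auto|].
      apply c1 in hd1; try apply Hg. apply c2 in hd2; try apply Hg.
      eapply (der_rule G RRAnd); [left; exact I| apply (i_rand Gm Dl t1 t2)| |].
      * split; simpl; psolve.
      * intros P0 [<-|[<-|[]]]; auto.
  -
    get_cand Hlow (A, a::b::r) sh_ror HA Hs t1 i1 f1 v1 d1 c1.
    exists [tw; t1]. split.
    + constructor; [auto|]. constructor; [|constructor].
      split; [auto|]; split; [auto|]; split; [vtac HP sh_ror HA v1|].
      apply dcat'.
      eapply (der_rule G RROr); [left; exact I| apply (i_ror (A ++ [t1]) r a b)| |].
      * split; simpl; [|rewrite HA]; psolve.
      * intros P0 [<-|[]]; auto.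
    + intros Gm Dl Hg. split; [intros hd; eapply covers_mono; [|apply (Cw _ _ Hg hd)]; intros z [<-|[]]; left; auto|].
      split; [intros; discriminate|]. split; [|repeat split; intros; discriminate].
      intros a' b' E hd; inversion E; subst. exists t1; split; [right; left; auto|].
      apply c1; try apply Hg. exact hd.
  -
    get_cand Hlow (a::A, b::r) sh_rimp HA Hs t1 i1 f1 v1 d1 c1.
    exists [tw; t1]. split.
    + constructor; [auto|]. constructor; [|constructor].
      split; [auto|]; split; [auto|]; split; [vtac HP sh_rimp HA v1|].
      apply dcat'.
      eapply (der_rule G RRImp); [left; exact I| apply (i_rimp (A ++ [t1]) r a b)| |].
      * split; simpl; [|rewrite HA]; psolve.
      * intros P0 [<-|[]]; auto.
    + intros Gm Dl Hg. split; [intros hd; eapply covers_mono; [|apply (Cw _ _ Hg hd)]; intros z [<-|[]]; left; auto|].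
      split; [intros; discriminate|]. split; [intros; discriminate|]. split; [|intros; discriminate].
      intros a' b' E hd; inversion E; subst. exists t1; split; [right; left; auto|].
      apply c1; try apply Hg. exact hd.
  - exists [tw]. split; [constructor; auto|].
    intros Gm Dl Hg. split; [intros hd; apply (Cw _ _ Hg hd)|].
    repeat split; intros; discriminate.
  - exists [tw]. split; [constructor; auto|].
    intros Gm Dl Hg. split; [intros hd; apply (Cw _ _ Hg hd)|].
    repeat split; intros; discriminate.
Qed.


Lemma CovLp_mono G P A B f r L1 L2 : incl L1 L2 -> CovLp G P A B f r L1 -> CovLp G P A B f r L2.
Proof.
  intros Hi H Gm Dl Hg. destruct (H Gm Dl Hg) as [h1 [h2 [h3 [h4 h5]]]].
  split; [intros; eapply covers_mono; eauto|].
  split; [intros; eapply covers_mono; eauto|].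
  split; [intros; eapply covers_mono; eauto|].
  split; intros; eapply covers_mono; eauto.
Qed.
Lemma CovRp_mono G P A B f r L1 L2 : incl L1 L2 -> CovRp G P A B f r L1 -> CovRp G P A B f r L2.
Proof.
  intros Hi H Gm Dl Hg. destruct (H Gm Dl Hg) as [h1 [h2 [h3 [h4 h5]]]].
  split; [intros; eapply covers_mono; eauto|].
  split; [intros; eapply covers_mono; eauto|].
  split; [intros; eapply covers_mono; eauto|].
  split; intros; eapply covers_mono; eauto.
Qed.

Lemma der_top G Gm Dl : derivable G (Gm, top :: Dl).
Proof.
  unfold top.
  eapply (der_rule G RRImp); [left; exact I| apply (i_rimp Gm Dl Bot Bot)| |].
  - split; simpl; psolve.
  - intros P0 [<-|[]].
    eapply (der_rule G RAxBot); [left; exact I| apply (i_axbot Gm (Bot :: Dl))| |].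
    split; simpl; psolve. intros P0 [].
Qed.

Lemma step G P A B : props P -> sinlang G (A,B) ->
  (forall T, sinlang G T -> lower T (A,B) -> exists th, ginterp G P T th) ->
  (exists thM, gwrt G P (A,B) thM) -> exists th, ginterp G P (A,B) th.
Proof.
  intros HP Hs Hlow [tM [BM CM]].
  destruct (collect (picks A) (fun x L => CovLp G P A B (fst x) (snd x) L) (gbase G P (A,B)))
    as [LA [FA CA]].
  { intros x L1 L2; apply CovLp_mono. }
  { intros [f r] Hin. apply picks_sound in Hin. apply left_pick; auto. }
  destruct (collect (picks B) (fun x L => CovRp G P A B (fst x) (snd x) L) (gbase G P (A,B)))
    as [LB [FB CB]].
  { intros x L1 L2; apply CovRp_mono. }
  { intros [f r] Hin. apply picks_sound in Hin. apply right_pick; auto. }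
  set (ax := (exists n, In (Var n) A /\ In (Var n) B) \/ In Bot A).
  assert (HT : exists Lt, Forall (gbase G P (A,B)) Lt /\ (ax -> In top Lt)).
  { destruct (Classical_Prop.classic ax) as [Hax|Hax]; [exists [top]|exists []]; split; [|intros; left; auto| |intros h; contradiction].
    - constructor; [|constructor].
      split; [apply inlang_imp; split; apply inlang_bot|]. split; [apply (f_top _ HP)|].
      split; [apply (v_top _ HP)|]. apply dcat'.
      destruct Hax as [[n [h1 h2]]|h].
      + apply in_split in h1 as [a1 [a2 ->]]. apply in_split in h2 as [b1 [b2 ->]].
        eapply (der_rule G RAx); [left; exact I| apply (i_ax (a1 ++ a2 ++ [top]) (b1 ++ b2) n)| |].
        split; simpl; psolve. intros P0 [].
      + apply in_split in h as [a1 [a2 ->]].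
        eapply (der_rule G RAxBot); [left; exact I| apply (i_axbot (a1 ++ a2 ++ [top]) B)| |].
        split; simpl; psolve. intros P0 [].
    - constructor. }
  destruct HT as [Lt [FT CT]].
  set (L := Lt ++ LA ++ LB ++ [tM]).
  assert (FL : Forall (gbase G P (A,B)) L).
  { apply Forall_app; split; auto. apply Forall_app; split; auto. apply Forall_app; split; auto. }
  exists (bigOr L). split; [apply bigOr_base; auto|].
    intros Gm Dl Hsl Hc Hd.
    assert (iA : incl LA L) by (intros z hz; apply in_or_app; right; apply in_or_app; auto).
    assert (iB : incl LB L) by (intros z hz; apply in_or_app; right; apply in_or_app; right; apply in_or_app; auto).
    assert (iM : In tM L) by (apply in_or_app; right; apply in_or_app; right; apply in_or_app; right; left; auto).
    eapply (inner G P A B (bigOr L) HP); [..| exact Hd | split; apply Permutation_refl | split; auto].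
    all: clear Gm Dl Hsl Hc Hd.
    + intros Gm Dl Hg f r HAr hd. destruct (picks_complete _ _ _ HAr) as [r' [Hin Hr']].
      apply covers_bigOr. eapply covers_mono; [exact iA|]. apply (proj1 (CA _ Hin Gm Dl Hg)).
      eapply derivable_perm; [exact hd| split; simpl; [rewrite Hr'|]; psolve].
    + intros Gm Dl Hg f r HAr hd. destruct (picks_complete _ _ _ HAr) as [r' [Hin Hr']].
      apply covers_bigOr. eapply covers_mono; [exact iB|]. apply (proj1 (CB _ Hin Gm Dl Hg)).
      eapply derivable_perm; [exact hd| split; simpl; [|rewrite Hr']; psolve].
    + intros Gm Dl Hg a b r HAr hd. destruct (picks_complete _ _ _ HAr) as [r' [Hin Hr']].
      apply covers_bigOr. eapply covers_mono; [exact iA|]. apply (proj1 (proj2 (CA _ Hin Gm Dl Hg)) a b eq_refl).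
      eapply derivable_perm; [exact hd| split; simpl; [rewrite Hr'|]; psolve].
    + intros Gm Dl Hg a b r HAr hd1 hd2. destruct (picks_complete _ _ _ HAr) as [r' [Hin Hr']].
      apply covers_bigOr. eapply covers_mono; [exact iA|]. apply (proj1 (proj2 (proj2 (CA _ Hin Gm Dl Hg))) a b eq_refl).
      eapply derivable_perm; [exact hd1| split; simpl; [rewrite Hr'|]; psolve].
      eapply derivable_perm; [exact hd2| split; simpl; [rewrite Hr'|]; psolve].
    + intros Gm Dl Hg a b r HAr hd1 hd2. destruct (picks_complete _ _ _ HAr) as [r' [Hin Hr']].
      apply covers_bigOr. eapply covers_mono; [exact iA|]. apply (proj1 (proj2 (proj2 (proj2 (CA _ Hin Gm Dl Hg)))) a b eq_refl).
      eapply derivable_perm; [exact hd1| split; simpl; [rewrite Hr'|]; psolve].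
      eapply derivable_perm; [exact hd2| split; simpl; [rewrite Hr'|]; psolve].
    + intros Gm Dl Hg a b r HAr hd1 hd2. destruct (picks_complete _ _ _ HAr) as [r' [Hin Hr']].
      apply covers_bigOr. eapply covers_mono; [exact iB|]. apply (proj1 (proj2 (CB _ Hin Gm Dl Hg)) a b eq_refl).
      eapply derivable_perm; [exact hd1| split; simpl; [|rewrite Hr']; psolve].
      eapply derivable_perm; [exact hd2| split; simpl; [|rewrite Hr']; psolve].
    + intros Gm Dl Hg a b r HAr hd. destruct (picks_complete _ _ _ HAr) as [r' [Hin Hr']].
      apply covers_bigOr. eapply covers_mono; [exact iB|]. apply (proj1 (proj2 (proj2 (CB _ Hin Gm Dl Hg))) a b eq_refl).
      eapply derivable_perm; [exact hd| split; simpl; [|rewrite Hr']; psolve].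
    + intros Gm Dl Hg a b r HAr hd. destruct (picks_complete _ _ _ HAr) as [r' [Hin Hr']].
      apply covers_bigOr. eapply covers_mono; [exact iB|]. apply (proj1 (proj2 (proj2 (proj2 (CB _ Hin Gm Dl Hg)))) a b eq_refl).
      eapply derivable_perm; [exact hd| split; simpl; [|rewrite Hr']; psolve].
    + intros Gm Dl n h1 h2. eapply bigOr_intro; [apply in_or_app; left; apply CT; left; eauto| apply der_top].
    + intros Gm Dl Hg n h1 h2. apply in_split in h1 as [a1 [a2 E]].
      assert (HAr : Permutation A (Var n :: a1 ++ a2)) by (rewrite E; psolve).
      destruct (picks_complete _ _ _ HAr) as [r' [Hin Hr']].
      apply covers_bigOr. eapply covers_mono; [exact iA|]. apply (proj2 (proj2 (proj2 (proj2 (CA _ Hin Gm Dl Hg)))) n eq_refl h2).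
    + intros Gm Dl Hg n h1 h2. apply in_split in h1 as [a1 [a2 E]].
      assert (HAr : Permutation B (Var n :: a1 ++ a2)) by (rewrite E; psolve).
      destruct (picks_complete _ _ _ HAr) as [r' [Hin Hr']].
      apply covers_bigOr. eapply covers_mono; [exact iB|]. apply (proj2 (proj2 (proj2 (proj2 (CB _ Hin Gm Dl Hg)))) n eq_refl h2).
    + intros Gm Dl h. eapply bigOr_intro; [apply in_or_app; left; apply CT; right; auto| apply der_top].
    + intros Gm Dl [h1 h2] hl. eapply bigOr_intro; [exact iM|]. apply CM; auto.
Qed.


Lemma generic G P : props P ->
  (forall S, sinlang G S -> exists thM,
     (forall T, sinlang G T -> sweight T < sweight S -> exists th, ginterp G P T th) ->
     gwrt G P S thM) ->
  forall S, sinlang G S -> exists th, ginterp G P S th.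
Proof.
  intros HP HM.
  assert (K : forall w l S, sweight S = w -> slen S = l -> sinlang G S -> exists th, ginterp G P S th).
  { intro w; induction w as [w IHw] using (well_founded_induction Wf_nat.lt_wf).
    intro l; induction l as [l IHl] using (well_founded_induction Wf_nat.lt_wf).
    intros [A B] Ew El Hs. apply step; auto.
    - intros T HsT [Hlt|[Heq Hlt]].
      + eapply (IHw (sweight T)); eauto. lia.
      + eapply (IHl (slen T)); eauto. lia. lia.
    - destruct (HM (A,B) Hs) as [tM H]. exists tM. apply H.
      intros T HsT Hlt. eapply (IHw (sweight T)); eauto. lia. }
  intros S Hs; eapply K; eauto.
Qed.

Lemma var_l n X : In (Var n) (fst X) -> In n (svars Neg X).
Proof. intros H; unfold svars; apply in_or_app; left; apply in_flat_map; exists (Var n); simpl; auto. Qed.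
Lemma var_r n X : In (Var n) (snd X) -> In n (svars Pos X).
Proof. intros H; unfold svars; apply in_or_app; right; apply in_flat_map; exists (Var n); simpl; auto. Qed.

Definition PL p s := mkP (fun th => ~ In p (vars s th))
  (fun th S => forall t, incl (vars t th) (svars t S)) (fun X => ~ In p (svars (opp s) X)).

Lemma props_PL p s : props (PL p s).
Proof.
  constructor; simpl.
  - auto.
  - destruct s; simpl; auto.
  - intros a b h1 h2; rewrite in_app_iff; tauto.
  - intros a b h1 h2; rewrite in_app_iff; tauto.
  - intros n X h c. destruct s; simpl; [|auto]. intros [E|[]]; subst. apply c. apply var_l; auto.
  - intros n X h c. destruct s; simpl; [auto|]. intros [E|[]]; subst. apply c. apply var_r; auto.
  - intros S t x [].
  - intros S t; destruct t; simpl; intros x [].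
  - intros a b S h1 h2 t; simpl; apply incl_app; auto.
  - intros a b S h1 h2 t; simpl; apply incl_app; auto.
  - intros n S h t; destruct t; simpl; intros x hx; [destruct hx as [<-|[]]; apply var_r; auto|destruct hx].
  - intros n S h t; destruct t; simpl; intros x hx; [destruct hx|destruct hx as [<-|[]]; apply var_l; auto].
  - intros th S1 S2 h1 h2 t. eapply incl_tran; eauto.
  - intros X1 X2 h c hin. apply c, h, hin.
Qed.

Definition PU p := mkP (fun th => ~ In p (allvars th))
  (fun th S => incl (allvars th) (sallvars S)) (fun X => ~ In p (sallvars X)).

Lemma props_PU p : props (PU p).
Proof.
  constructor; simpl; intros; unfold allvars, sallvars in *; simpl in *.
  - auto.
  - auto.
  - rewrite !in_app_iff in *; tauto.
  - rewrite !in_app_iff in *; tauto.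
  - intros [E|[]]; subst. apply H0. apply in_or_app; right; apply var_l; auto.
  - intros [E|[]]; subst. apply H0. apply in_or_app; left; apply var_r; auto.
  - intros x [].
  - intros x [].
  - intros x hx; rewrite !in_app_iff in hx; destruct hx as [[h|h]|[h|h]]; [apply H|apply H0|apply H|apply H0]; apply in_or_app; auto.
  - intros x hx; rewrite !in_app_iff in hx; destruct hx as [[h|h]|[h|h]]; [apply H|apply H0|apply H|apply H0]; apply in_or_app; auto.
  - intros x [<-|[]]; apply in_or_app; left; apply var_r; auto.
  - intros x [<-|[]]; apply in_or_app; right; apply var_l; auto.
  - eapply incl_tran; [eauto|]. intros x; rewrite !in_app_iff; intros [hx|hx]; [left|right]; apply H; auto.
  - intros hin. apply H0. rewrite in_app_iff in *; destruct hin; [left|right]; apply H; auto.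
Qed.

Theorem mainTheorem6 (G : calculus) :
  (MULIP G -> ULIP G) /\ (MUIP G -> UIP G).
Proof.
  split.
  - intros HM S p s Hs. apply (generic G (PL p s) (props_PL p s)); [|exact Hs].
    intros S0 Hs0. destruct (HM S0 p s Hs0) as [th H]. exists th. exact H.
  - intros HM S p Hs. apply (generic G (PU p) (props_PU p)); [|exact Hs].
    intros S0 Hs0. destruct (HM S0 p Hs0) as [th H]. exists th. exact H.
Qed.
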